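(* Let $\vec B$ be a binary digit vector of length $N$. If $x\in\mathbb Q\cap[0,1]$, then $F_{\vec B}(x)\in\mathbb Q$.
   Context: A binary digit vector of length (scale factor) $N\ge3$ is $\vec B=(b_0,\dots,b_{N-1})\in\{0,1\}^N$ with $2\le\|\vec B\|:=\sum_i b_i\le N-1$; its digit set is $D=\{i:b_i=1\}$. With $\phi_d(x)=(x+d)/N$ for $d\in D$, let $\mu_{\vec B}$ be the unique Borel probability measure with $\mu_{\vec B}=\frac{1}{\|\vec B\|}\sum_{d\in D}\mu_{\vec B}\circ\phi_d^{-1}$, supported on the attractor $C_{\vec B}\subset[0,1]$. The CDF is $F_{\vec B}(x)=\mu_{\vec B}([0,x])$, $x\in[0,1]$. *)

(* Defs.v *)
From HB Require Import structures.
From mathcomp Require Import all_boot all_order all_algebra.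
From mathcomp Require Import all_classical all_reals all_analysis.
Set Implicit Arguments. Unset Strict Implicit. Unset Printing Implicit Defensive.
Import Order.TTheory GRing.Theory Num.Theory.
Local Open Scope classical_set_scope.
Local Open Scope ring_scope.

Definition bnorm (N : nat) (b : 'I_N -> bool) : nat := #|[pred i | b i]|.

Definition is_binary_digit_vector (N : nat) (b : 'I_N -> bool) : Prop :=
  (3 <= N)%N /\ (2 <= bnorm b)%N /\ (bnorm b <= N.-1)%N.

Definition phi (R : realType) (N : nat) (d : nat) (x : R) : R :=
  (x + d%:R) / N%:R.

Definition self_similar (R : realType) (N : nat) (b : 'I_N -> bool)
  (mu : probability R R) : Prop :=
  forall A : set R, measurable A ->
    (mu A = ((bnorm b)%:R^-1 : R)%:E *
           \sum_(d < N | b d) mu (phi N d @^-1` A))%E.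

Definition cdfB (R : realType) (mu : probability R R) (x : R) : \bar R :=
  mu `[0, x]%classic.

(* Main.v *)
Require Import Defs.
From HB Require Import structures.
From mathcomp Require Import all_boot all_order all_algebra.
From mathcomp Require Import all_classical all_reals all_analysis.
From mathcomp Require Import ring lra zify.
Import Order.TTheory GRing.Theory Num.Theory.
Local Open Scope classical_set_scope.
Local Open Scope ring_scope.
Section B.
Variable R : realType.
Variable N : nat.
Variable b : 'I_N -> bool.
Variable mu : probability R R.
Hypothesis hb : is_binary_digit_vector b.
Hypothesis hs : self_similar b mu.

Definition P (A : set R) : R := fine (mu A).

Lemma mu_fin A : measurable A -> mu A = (P A)%:E.
Proof. by move=> mA; rewrite fineK // fin_num_measure. Qed.

Lemma P_ge0 A : 0 <= P A.
Proof. by rewrite /P fine_ge0. Qed.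

Lemma P_le A B : measurable A -> measurable B -> A `<=` B -> P A <= P B.
Proof.
move=> mA mB AB; rewrite -lee_fin -!mu_fin //.
by apply: le_measure => //; rewrite inE.
Qed.

Lemma P_le1 A : measurable A -> P A <= 1.
Proof. by move=> mA; rewrite -lee_fin -mu_fin //; exact: probability_le1. Qed.

Lemma N_gt0 : (0 < N)%N.
Proof. by case: hb => h _; apply: leq_trans h. Qed.

Lemma m_ge2 : (2 <= bnorm b)%N.
Proof. by case: hb => _ []. Qed.

Lemma ssR A : measurable A -> (forall d : 'I_N, measurable (phi N d @^-1` A)) ->
  P A = (bnorm b)%:R^-1 * \sum_(d < N | b d) P (phi N d @^-1` A).
Proof.
move=> mA mpre; rewrite {1}/P (hs A mA).
rewrite (eq_bigr (fun d : 'I_N => (P (phi N d @^-1` A))%:E)); last first.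
  by move=> d _; rewrite -mu_fin.
by rewrite sumEFin -EFinM.
Qed.

Lemma sum_bcst (v : R) : \sum_(d < N | b d) v = (bnorm b)%:R * v.
Proof.
by rewrite (@eq_bigl _ _ _ _ _ _ [pred i | b i]) // sumr_const /bnorm mulr_natl.
Qed.

Lemma avg_le A v : measurable A -> (forall d : 'I_N, measurable (phi N d @^-1` A)) ->
  (forall d : 'I_N, b d -> P (phi N d @^-1` A) <= v) -> P A <= v.
Proof.
move=> mA mpre hv; rewrite ssR //.
have m0 : 0 < (bnorm b)%:R :> R by rewrite ltr0n; apply: leq_trans m_ge2.
apply: le_trans (ler_wpM2l _ (ler_sum _ hv)) _; first by rewrite invr_ge0 ltW.
by rewrite sum_bcst mulKf // gt_eqF.
Qed.

Lemma sum_single (F : 'I_N -> R) (k : 'I_N) g : 0 <= g ->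
  (forall d, b d -> F d <= (d == k)%:R * g) -> \sum_(d < N | b d) F d <= g.
Proof.
move=> g0 H; apply: le_trans (ler_sum _ H) _.
apply: (@le_trans _ _ (\sum_(d < N) (d == k)%:R * g)).
  rewrite [X in _ <= X](bigID b) /= lerDl; apply: sumr_ge0 => d _.
  by apply: mulr_ge0.
rewrite (bigD1 k) //= eqxx mul1r big1 ?addr0 // => d /negbTE ->.
by rewrite mul0r.
Qed.

Lemma NR_gt0 : 0 < N%:R :> R.
Proof. by rewrite ltr0n N_gt0. Qed.

Lemma pre_c (d : nat) (x : R) : phi N d @^-1` `]-oo, x]%classic = `]-oo, x * N%:R - d%:R]%classic.
Proof.
have := NR_gt0 => n0.
apply/seteqP; split=> y; rewrite /= !in_itv /= /phi ler_pdivrMr //; lra.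
Qed.

Lemma pre_o (d : nat) (x : R) : phi N d @^-1` `]-oo, x[%classic = `]-oo, x * N%:R - d%:R[%classic.
Proof.
have := NR_gt0 => n0.
apply/seteqP; split=> y; rewrite /= !in_itv /= /phi ltr_pdivrMr //; lra.
Qed.

Lemma pre_oy (d : nat) (x : R) : phi N d @^-1` `]x, +oo[%classic = `]x * N%:R - d%:R, +oo[%classic.
Proof.
have := NR_gt0 => n0.
apply/seteqP; split=> y; rewrite /= !in_itv /= /phi ?andbT ltr_pdivlMr //; lra.
Qed.

Lemma tail0 (F : nat -> set R) (c : \bar R) :
  (forall n, measurable (F n)) ->
  (forall n m, (n <= m)%N -> F m `<=` F n) ->
  \bigcap_n F n = set0 ->
  (forall n, (c <= mu (F n))%E) -> (c <= 0)%E.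
Proof.
move=> mF decF capF cle.
have H := @nonincreasing_cvg_mu _ _ _ mu F _ mF _ _.
rewrite capF measure0 in H.
have H' := H (le_lt_trans (probability_le1 mu (mF 0%N)) (ltry _)) measurable0.
have {H H'} H : (mu \o F) x @[x --> \oo] --> 0%E.
  by apply: H' => n m nm; apply/subsetPset; apply: decF.
rewrite -(cvg_lim _ H) //; apply: lime_ge; first by apply/cvg_ex; exists 0%E.
by apply: nearW => n; apply: cle.
Qed.

Lemma N_gt1 : (1 < N)%N.
Proof. by case: hb => h _; apply: leq_trans h. Qed.

Lemma left_step (c : R) : 0 <= c ->
  P `]-oo, - c]%classic <= P `]-oo, - (c * N%:R)]%classic.
Proof.
move=> c0; apply: avg_le => //.
  by move=> d; rewrite pre_c.
move=> d _; rewrite pre_c; apply: P_le => // y; rewrite /= !in_itv /=.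
have := ler0n R d; lra.
Qed.

Lemma left_m1 : P `]-oo, -1]%classic = 0.
Proof.
have H : forall n, P `]-oo, -1]%classic <= P `]-oo, - (n%:R)]%classic.
  move=> n; have H1 : forall k, P `]-oo, -1]%classic <= P `]-oo, - ((N ^ k)%:R)]%classic.
    elim=> [|k IH]; first by rewrite expn0.
    apply: le_trans IH _; rewrite expnSr natrM; apply: left_step; exact: ler0n.
  apply: le_trans (H1 n) _; apply: P_le => // y; rewrite /= !in_itv /=.
  have : n%:R <= (N ^ n)%:R :> R by rewrite ler_nat ltnW // ltn_expl // N_gt1.
  lra.
apply/eqP; rewrite eq_le P_ge0 andbT -lee_fin.
apply: (tail0 (fun n => `]-oo, - (n%:R)]%classic)) => //.
- move=> n m nm y; rewrite /= !in_itv /=.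
  have : n%:R <= m%:R :> R by rewrite ler_nat.
  lra.
- apply/seteqP; split=> // y /= Hy.
  have := Hy (Num.truncn (- y)).+1 I; rewrite /= in_itv /=.
  have := truncnS_gt (- y); lra.
- by move=> n; rewrite mu_fin // lee_fin.
Qed.

Lemma right_step (c : R) : 0 <= c ->
  P `]1 + c, +oo[%classic <= P `]1 + c * N%:R, +oo[%classic.
Proof.
move=> c0; apply: avg_le => //.
  by move=> d; rewrite pre_oy.
move=> d _; rewrite pre_oy; apply: P_le => // y; rewrite /= !in_itv /= !andbT.
have : (d%:R + 1 <= N%:R :> R) by rewrite natr1 ler_nat ltn_ord.
have := ler0n R d; nra.
Qed.

Lemma right_2 : P `]1 + 1, +oo[%classic = 0.
Proof.
have H : forall n, P `]1 + 1, +oo[%classic <= P `]n%:R, +oo[%classic.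
  move=> n; have H1 : forall k, P `]1 + 1, +oo[%classic <= P `]1 + (N ^ k)%:R, +oo[%classic.
    elim=> [|k IH]; first by rewrite expn0.
    apply: le_trans IH _; rewrite expnSr natrM; apply: right_step; exact: ler0n.
  apply: le_trans (H1 n) _; apply: P_le => // y; rewrite /= !in_itv /= !andbT.
  have : n%:R <= (N ^ n)%:R :> R by rewrite ler_nat ltnW // ltn_expl // N_gt1.
  lra.
apply/eqP; rewrite eq_le P_ge0 andbT -lee_fin.
apply: (tail0 (fun n => `]n%:R, +oo[%classic)) => //.
- move=> n m nm y; rewrite /= !in_itv /= !andbT.
  have : n%:R <= m%:R :> R by rewrite ler_nat.
  lra.
- apply/seteqP; split=> // y /= Hy.
  have := Hy (Num.truncn y).+1 I; rewrite /= in_itv /= andbT.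
  have := truncnS_gt y; lra.
- by move=> n; rewrite mu_fin // lee_fin.
Qed.

Lemma m_gt0 : 0 < (bnorm b)%:R :> R.
Proof. by rewrite ltr0n; apply: leq_trans m_ge2. Qed.

Lemma fix0 (g : R) : 0 <= g -> g <= (bnorm b)%:R^-1 * g -> g = 0.
Proof.
move=> g0 H.
have := ler_wpM2l (ltW m_gt0) H; rewrite mulrA mulfV ?gt_eqF ?m_gt0 // mul1r.
have : 2 <= (bnorm b)%:R :> R by rewrite ler_nat m_ge2.
nra.
Qed.

Lemma left_0 : P `]-oo, 0[%classic = 0.
Proof.
apply: fix0; first exact: P_ge0.
rewrite [X in X <= _]ssR //; last by move=> d; rewrite pre_o.
apply: ler_wpM2l; first by rewrite invr_ge0 ltW ?m_gt0.
apply: (sum_single _ (Ordinal N_gt0)); first exact: P_ge0.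
move=> d _; rewrite pre_o mul0r sub0r.
have [->|dn] := eqVneq d (Ordinal N_gt0); first by rewrite /= oppr0 mul1r.
rewrite mul0r -left_m1; apply: P_le => // y; rewrite /= !in_itv /=.
have : 1 <= d%:R :> R.
  rewrite ler1n lt0n; apply: contra dn => /eqP d0; apply/eqP; exact: val_inj.
lra.
Qed.

Lemma right_1 : P `]1, +oo[%classic = 0.
Proof.
have kN : (N.-1 < N)%N by rewrite prednK ?N_gt0.
apply: fix0; first exact: P_ge0.
rewrite [X in X <= _]ssR //; last by move=> d; rewrite pre_oy.
apply: ler_wpM2l; first by rewrite invr_ge0 ltW ?m_gt0.
apply: (sum_single _ (Ordinal kN)); first exact: P_ge0.
move=> d _; rewrite pre_oy mul1r.
have [->|dn] := eqVneq d (Ordinal kN).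
  rewrite /= mul1r.
  have -> : N%:R - (N.-1)%:R = 1 :> R.
    rewrite -natrB ?leq_pred //.
    have e : (N - N.-1 = 1)%N by have := N_gt0; lia.
    by rewrite e.
  exact: lexx.
rewrite mul0r -right_2; apply: P_le => // y; rewrite /= !in_itv /= !andbT.
have : d%:R + 2 <= N%:R :> R.
  have : (d < N.-1)%N.
    rewrite ltn_neqAle -ltnS prednK ?N_gt0 // ltn_ord andbT.
    by apply: contra dn => /eqP dk; apply/eqP; exact: val_inj.
  by move=> h; rewrite -natrD ler_nat; have := N_gt0; lia.
lra.
Qed.

Definition G (y : R) := P `]-oo, y]%classic.

Lemma G_neg y : y < 0 -> G y = 0.
Proof.
move=> y0; apply/eqP; rewrite eq_le P_ge0 andbT -left_0.
apply: P_le => // z; rewrite /= !in_itv /=; lra.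
Qed.

Lemma G_ge1 y : 1 <= y -> G y = 1.
Proof.
move=> y1.
have U : `]-oo, y]%classic `|` `]y, +oo[%classic = [set: R].
  apply/seteqP; split=> // z _ /=; rewrite !in_itv /= andbT.
  by case: (lerP z y) => _; [left|right].
have D : `]-oo, y]%classic `&` `]y, +oo[%classic = set0 :> set R.
  apply/seteqP; split=> // z /=; rewrite !in_itv /= andbT => -[]; lra.
have := measureU mu (measurable_itv _) (measurable_itv _) D.
rewrite U => e0.
have : (mu `]-oo, y]%classic + mu `]y, +oo[%classic = 1)%E.
  by rewrite -e0; apply: probability_setT.
rewrite !mu_fin // -EFinD => -[] e.
have : P `]y, +oo[%classic <= 0.
  rewrite -right_1; apply: P_le => // z; rewrite /= !in_itv /= !andbT; lra.
have := P_ge0 `]y, +oo[%classic.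
rewrite /G; lra.
Qed.

Lemma cdf_G y : 0 <= y -> mu `[0, y]%classic = (G y)%:E.
Proof.
move=> y0.
have U : `]-oo, 0[%classic `|` `[0, y]%classic = `]-oo, y]%classic :> set R.
  apply/seteqP; split=> z /=; rewrite !in_itv /=.
    by case=> [h|/andP[h1 h2]]; lra.
  move=> zy; case: (ltrP z 0) => h; [left; lra | right; apply/andP; split; lra].
have D : `]-oo, 0[%classic `&` `[0, y]%classic = set0 :> set R.
  apply/seteqP; split=> // z /=; rewrite !in_itv /= => -[] ? /andP[]; lra.
have := measureU mu (measurable_itv _) (measurable_itv _) D.
rewrite U => e0.
rewrite /G -mu_fin // e0 -[LHS]add0e; congr (_ + _)%E.
have h := @mu_fin (`]-oo, 0[%classic) (measurable_itv _).
rewrite left_0 in h; exact: (esym h).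
Qed.

Lemma G_rec x : G x = (bnorm b)%:R^-1 * \sum_(d < N | b d) G (x * N%:R - d%:R).
Proof.
rewrite /G ssR //; last by move=> d; rewrite pre_c.
by congr (_ * _); apply: eq_bigr => d _; rewrite pre_c.
Qed.

Lemma step_pq (q p : nat) : (0 < q)%N -> (p < q)%N ->
  exists a c : rat, 0 <= c <= 1/2 /\
    G (p%:R / q%:R) = ratr a + ratr c * G (((N * p) %% q)%:R / q%:R).
Proof.
move=> q0 pq.
set k := ((N * p) %/ q)%N; set r := ((N * p) %% q)%N.
have qR : 0 < q%:R :> R by rewrite ltr0n.
have ex : p%:R / q%:R * N%:R = k%:R + r%:R / q%:R :> R.
  have e := divn_eq (N * p) q; rewrite -/k -/r in e.
  have eR : (N * p)%:R = k%:R * q%:R + r%:R :> R by rewrite e natrD natrM.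
  rewrite natrM in eR.
  apply: (@mulIf _ q%:R); first by rewrite gt_eqF.
  by rewrite mulrDl mulfVK ?gt_eqF // -eR mulrAC mulfVK ?gt_eqF // mulrC.
have rq : r%:R / q%:R < 1 :> R by rewrite ltr_pdivrMr // mul1r ltr_nat ltn_pmod.
have r0 : 0 <= r%:R / q%:R :> R by rewrite divr_ge0.
have kN : (k < N)%N by rewrite ltn_divLR // ltn_pmul2l // N_gt0.
have term : forall d : 'I_N, G (p%:R / q%:R * N%:R - d%:R) =
    ((d < k)%N)%:R + ((d == k :> nat))%:R * G (r%:R / q%:R).
  move=> d; rewrite ex; case: (ltngtP d k) => dk.
  - rewrite G_ge1 ?mul0r ?addr0 //.
    have : d%:R + 1 <= k%:R :> R by rewrite natr1 ler_nat.
    lra.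
  - rewrite G_neg ?mul0r ?addr0 //.
    have : k%:R + 1 <= d%:R :> R by rewrite natr1 ler_nat.
    lra.
  - rewrite dk addrC addKr (_ : true%:R = 1 :> R) // (_ : false%:R = 0 :> R) // add0r; symmetry; apply: mul1r.
set a : rat := (bnorm b)%:R^-1 * \sum_(d < N | b d) ((d < k)%N)%:R.
set c : rat := (bnorm b)%:R^-1 * \sum_(d < N | b d) ((d == k :> nat))%:R.
have ratrc : ratr c = (bnorm b)%:R^-1 * \sum_(d < N | b d) ((d == k :> nat))%:R :> R.
  by rewrite rmorphM fmorphV rmorph_nat rmorph_sum; congr (_ * _); apply: eq_bigr => d _; rewrite rmorph_nat.
have ratra : ratr a = (bnorm b)%:R^-1 * \sum_(d < N | b d) ((d < k)%N)%:R :> R.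
  by rewrite rmorphM fmorphV rmorph_nat rmorph_sum; congr (_ * _); apply: eq_bigr => d _; rewrite rmorph_nat.
exists a, c; split.
- apply/andP; split.
    by rewrite mulr_ge0 ?invr_ge0 ?ler0n // sumr_ge0.
  rewrite -(ler_rat R) ratrc fmorph_div rmorph1 rmorph_nat.
  have S1 : \sum_(d < N | b d) ((d == k :> nat))%:R <= 1 :> R.
    apply: (sum_single _ (Ordinal kN)) => // d _.
    by rewrite mulr1.
  have mi : (bnorm b)%:R^-1 <= 1 / 2 :> R.
    by rewrite mul1r lef_pV2 ?posrE ?m_gt0 // ler_nat m_ge2.
  apply: le_trans mi; rewrite -[X in _ <= X]mulr1; apply: ler_wpM2l.
    by rewrite invr_ge0 ler0n.
  exact: S1.
- rewrite G_rec ratra ratrc (eq_bigr _ (fun d _ => term d)) big_split /=.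
  by rewrite mulrDr -mulr_suml mulrA.
Qed.
Lemma iter_step (g : nat -> R) (f : nat -> nat) (q : nat) :
  (forall p, (p < q)%N -> (f p < q)%N) ->
  (forall p, (p < q)%N -> exists a c : rat, 0 <= c <= 1/2 /\ g p = ratr a + ratr c * g (f p)) ->
  forall n p, (p < q)%N -> exists a c : rat, [/\ 0 <= c <= 1, (0 < n)%N -> c <= 1/2 &
     g p = ratr a + ratr c * g (iter n f p)].
Proof.
move=> fq st; elim=> [|n IH] p pq.
  by exists 0, 1; split => //=; rewrite rmorph0 rmorph1 add0r mul1r.
have [a1 [c1 [/andP[c10 c12] e1]]] := st p pq.
have [a2 [c2 [/andP[c20 c21] _ e2]]] := IH (f p) (fq p pq).
exists (a1 + c1 * a2), (c1 * c2); split.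
- apply/andP; split; first exact: mulr_ge0.
  rewrite -[1]mulr1; apply: ler_pM => //; apply: le_trans c12 _.
  by rewrite ler_pdivrMr // mul1r ler1n.
- move=> _; rewrite -[1/2]mulr1; exact: ler_pM.
- by rewrite iterSr e1 e2 rmorphD !rmorphM /=; ring.
Qed.

Lemma rat_val (g : nat -> R) (f : nat -> nat) (q : nat) :
  (forall p, (p < q)%N -> (f p < q)%N) ->
  (forall p, (p < q)%N -> exists a c : rat, 0 <= c <= 1/2 /\ g p = ratr a + ratr c * g (f p)) ->
  forall p, (p < q)%N -> exists z : rat, g p = ratr z.
Proof.
move=> fq st p pq.
have itq : forall n, (iter n f p < q)%N.
  by elim=> //= n IH; apply: fq.
pose h (i : 'I_q.+1) : 'I_q := Ordinal (itq i).
have [inj|ninj] := boolP (injectiveb h).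
  by have := leq_card _ (injectiveP _ inj); rewrite !card_ord ltnn.
have : exists i j : 'I_q.+1, (i < j)%N /\ h i = h j.
  apply: contrapT => hn; move/negP: ninj; apply; apply/injectiveP => i j hij.
  case: (ltngtP i j) => [ij|ji|/val_inj //].
  - by exfalso; apply: hn; exists i, j.
  - by exfalso; apply: hn; exists j, i.
move=> [i [j [ij hij]]].
have eij : iter i f p = iter j f p by move: hij => /(congr1 val).
have [a [c [/andP[c0 c1] ch e]]] := @iter_step g f q fq st (j - i) _ (itq i).
rewrite -iterD subnK ?(ltnW ij) // -eij in e.
have c12 : c <= 1/2 by apply: ch; rewrite subn_gt0.
set y := iter i f p in e *.
have gy : g y = ratr (a / (1 - c)).
  have c1' : 0 < 1 - c by lra.
  have cR : ratr c <= 1/2 :> R.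
    by move: c12; rewrite -(ler_rat R) fmorph_div rmorph1 rmorph_nat.
  rewrite fmorph_div rmorphB rmorph1 /=.
  have c1R : ratr c < 1 :> R by lra.
  have hh : g y * (1 - ratr c) = ratr a by rewrite mulrBr mulr1 {1}e; ring.
  by rewrite -hh mulfK // subr_eq0 gt_eqF.
have [a' [c' [_ _ e']]] := @iter_step g f q fq st i p pq.
exists (a' + c' * (a / (1 - c))).
by rewrite e' -/y gy rmorphD rmorphM.
Qed.
End B.

Theorem lemma2p6 (R : realType) (N : nat) (b : 'I_N -> bool)
  (mu : probability R R) :
  is_binary_digit_vector b -> self_similar b mu ->
  forall x : rat, 0 <= x <= 1 ->
  exists q : rat, cdfB mu (ratr x) = (ratr q)%:E.
Proof.
move=> hb hs x /andP[x0 x1].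
have [->|xn1] := eqVneq x 1.
  exists 1; rewrite /cdfB rmorph1 (@cdf_G R N b mu hb hs) // (@G_ge1 R N b mu hb hs) //.
have xl1 : x < 1 by rewrite lt_neqAle xn1.
have [p ep] : exists p : nat, numq x = p%:Z.
  by exists `|numq x|%N; rewrite gez0_abs // numq_ge0.
have [q eq] : exists q : nat, denq x = q%:Z.
  by exists `|denq x|%N; rewrite gez0_abs // ltW // denq_gt0.
have q0 : (0 < q)%N by rewrite -ltz_nat -eq denq_gt0.
have ex : ratr x = p%:R / q%:R :> R by rewrite /ratr ep eq.
have pq : (p < q)%N.
  have := xl1; rewrite -(ltr_rat R) rmorph1 ex ltr_pdivrMr ?ltr0n // mul1r ltr_nat.
  by [].
have [z hz] := @rat_val R (fun n => @G R mu (n%:R / q%:R)) (fun n => (N * n) %% q)%N q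
  (fun n _ => ltn_pmod _ q0) (fun n nq => @step_pq R N b mu hb hs q n q0 nq) p pq.
exists z; rewrite /cdfB ex (@cdf_G R N b mu hb hs) ?divr_ge0 //=.
by rewrite hz.
Qed.
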